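(* For any discrete memoryless channel $\mathcal W$ from a finite set $\mathcal X$ to a finite set $\mathcal Y$, $\lim_{\alpha\to1}U_\alpha(\mathcal W)=U(\mathcal W)$ (both one-sided limits exist and equal $U(\mathcal W)$).
   Context: $D(P\|Q)=\sum P\log(P/Q)$ ($0\log(0/q)=0$; $+\infty$ if $P\not\ll Q$); for $\alpha\in(0,1)\cup(1,\infty)$, $D_\alpha(P\|Q)=\frac1{\alpha-1}\log\sum_{x:P(x)>0}P(x)^\alpha Q(x)^{1-\alpha}$ ($+\infty$ if $\alpha>1$ and $P\not\ll Q$). With $P_{XY}(x,y)=P_X(x)\mathcal W(y|x)$: $U(\mathcal W)=\max_{P_X}\min_{Q_Y}D(P_X\times Q_Y\|P_{XY})$ and $U_\alpha(\mathcal W)=\max_{P_X}\min_{Q_Y}D_\alpha(P_X\times Q_Y\|P_{XY})$. *)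

(* Defs.v *)
From HB Require Import structures.
From mathcomp Require Import all_boot all_order all_algebra.
From mathcomp Require Import all_classical all_reals all_analysis.
Set Implicit Arguments. Unset Strict Implicit. Unset Printing Implicit Defensive.
Import Order.TTheory GRing.Theory Num.Theory.
Local Open Scope classical_set_scope.
Local Open Scope ring_scope.

Section Defs.
Variable R : realType.

Definition is_dist (T : finType) (P : T -> R) : Prop :=
  (forall t, 0 <= P t) /\ \sum_(t : T) P t = 1.

Definition dists (T : finType) : set (T -> R) := [set P | is_dist P].

(* discrete memoryless channel W(y|x) *)
Definition is_channel (X Y : finType) (W : X -> Y -> R) : Prop :=
  forall x, is_dist (W x).

Definition abs_cont (T : finType) (P Q : T -> R) : bool :=
  [forall t, (0 < P t) ==> (0 < Q t)].

(* KL divergence (natural log), 0 log(0/q) = 0, +oo if not P << Q *)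
Definition KL (T : finType) (P Q : T -> R) : \bar R :=
  if abs_cont P Q then (\sum_(t | 0 < P t) P t * ln (P t / Q t))%:E
  else +oo%E.

Definition renyi_sum (T : finType) (a : R) (P Q : T -> R) : R :=
  \sum_(t | 0 < P t) P t `^ a * Q t `^ (1 - a).

(* Renyi divergence of order a (a in (0,1) u (1,oo)):
   1/(a-1) log sum_{P>0} P^a Q^(1-a); +oo if a > 1 and not P << Q;
   for a < 1 a zero sum gives log 0 = -oo, hence the value +oo. *)
Definition renyi (T : finType) (a : R) (P Q : T -> R) : \bar R :=
  if (1 < a) && ~~ abs_cont P Q then +oo%E
  else if renyi_sum a P Q == 0 then +oo%E
  else ((a - 1)^-1 * ln (renyi_sum a P Q))%:E.

Definition prodPQ (X Y : finType) (P : X -> R) (Q : Y -> R) : X * Y -> R :=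
  fun xy => P xy.1 * Q xy.2.
Definition joint (X Y : finType) (P : X -> R) (W : X -> Y -> R) : X * Y -> R :=
  fun xy => P xy.1 * W xy.1 xy.2.

Definition U (X Y : finType) (W : X -> Y -> R) : \bar R :=
  ereal_sup ((fun P => ereal_inf
     ((fun Q => KL (prodPQ P Q) (joint P W)) @` @dists Y)) @` @dists X).

Definition U_alpha (X Y : finType) (W : X -> Y -> R) (a : R) : \bar R :=
  ereal_sup ((fun P => ereal_inf
     ((fun Q => renyi a (prodPQ P Q) (joint P W)) @` @dists Y)) @` @dists X).

End Defs.

(* Main.v *)
Require Import Defs.
From HB Require Import structures.
From mathcomp Require Import all_boot all_order all_algebra.
From mathcomp Require Import all_classical all_reals all_analysis.
From mathcomp Require Import ring lra.
Import Order.TTheory GRing.Theory Num.Theory.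
Import numFieldNormedType.Exports.
Local Open Scope classical_set_scope.
Local Open Scope ring_scope.

Section Basic.
Variable R : realType.
Implicit Types u x y : R.

Lemma expR_le_quad u : u <= 2^-1 -> expR u <= 1 + u + 2 * u ^+ 2.
Proof.
move=> hu.
have h1 : 1 - u <= expR (- u) by have := expR_ge1Dx (- u).
have hp : 0 < 1 - u by lra.
have : expR u <= (1 - u)^-1.
  rewrite -[u]opprK expRN opprK.
  by rewrite lef_pV2 ?posrE ?expR_gt0.
move=> /le_trans; apply.
rewrite -div1r ler_pdivrMr // mulrC.
have : 0 <= u ^+ 2 * (1 - 2 * u) by apply: mulr_ge0; [exact: sqr_ge0|lra].
move=> h; rewrite -subr_ge0.
have -> : (1 - u) * (1 + u + 2 * u ^+ 2) - 1 = u ^+ 2 * (1 - 2 * u) by ring.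
exact: h.
Qed.

Lemma ln_le_sub1 x : 0 < x -> ln x <= x - 1.
Proof.
move=> x0; have := @le_ln1Dx R (x - 1).
have -> : 1 + (x - 1) = x by ring.
by apply; lra.
Qed.

Lemma q_ln2 (q : R) : 0 < q -> q <= 1 -> q * ln q ^+ 2 <= 4.
Proof.
move=> q0 q1.
set r := Num.sqrt q.
have r0 : 0 < r by rewrite sqrtr_gt0.
have rr : r * r = q by rewrite -expr2 sqr_sqrtr // ltW.
have lq : ln q = ln r + ln r by rewrite -rr lnM.
have r1 : r <= 1 by rewrite -sqrtr1 ler_sqrt.
have v0 : 0 <= - ln r by rewrite oppr_ge0 ln_le0.
have : ln (r^-1) <= r^-1 - 1 by apply: ln_le_sub1; rewrite invr_gt0.
rewrite lnV ?posrE // => hv.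
have hrv : r * (- ln r) <= 1.
  have : r * (- ln r) <= r * (r^-1 - 1) by rewrite ler_pM2l.
  rewrite mulrBr mulfV ?gt_eqF //; lra.
rewrite lq -rr.
have : 0 <= r * (- ln r) by rewrite mulr_ge0 // ltW.
nra.
Qed.

Lemma amgm x y a : 0 <= x -> 0 <= y -> 0 < a < 1 ->
  x `^ a * y `^ (1 - a) <= a * x + (1 - a) * y.
Proof.
move=> x0 y0 /andP[a0 a1].
have [->|xp] := eqVneq x 0.
  rewrite powR0 ?gt_eqF // mul0r; apply: addr_ge0; nra.
have [->|yp] := eqVneq y 0.
  rewrite powR0 ?mulr0; first by apply: addr_ge0; nra.
  by apply/eqP; lra.
have xg : 0 < x by rewrite lt_def xp.
have yg : 0 < y by rewrite lt_def yp.
set m := a * x + (1 - a) * y.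
have mg : 0 < m by rewrite /m; nra.
have hx := @ln_le_sub1 (x / m) (divr_gt0 xg mg).
have hy := @ln_le_sub1 (y / m) (divr_gt0 yg mg).
rewrite !ln_div ?posrE // in hx hy.
have key : a * ln x + (1 - a) * ln y <= ln m.
  have e : a * (x / m - 1) + (1 - a) * (y / m - 1) = 0.
    have mne : m != 0 by rewrite gt_eqF.
    rewrite /m in mne *; field; exact: mne.
  nra.
rewrite /powR !gt_eqF // -expRD -(lnK (mg : m \in Num.pos)).
rewrite ler_expR; lra.
Qed.

End Basic.
Section Weighted.
Variable R : realType.
Variables (I : finType) (p : pred I) (w z : I -> R).
Hypothesis hw : forall i, p i -> 0 <= w i.
Hypothesis hs : \sum_(i | p i) w i = 1.

Lemma jensen_exp t :
  expR (t * \sum_(i | p i) w i * z i) <= \sum_(i | p i) w i * expR (t * z i).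
Proof.
set m := \sum_(i | p i) w i * z i.
apply: (@le_trans _ _ (\sum_(i | p i) (expR (t * m) * w i +
     (expR (t * m) * t) * (w i * z i) - (expR (t * m) * t * m) * w i))).
  rewrite sumrB big_split /= -!mulr_sumr hs -/m; lra.
apply: ler_sum => i pi.
have h := expR_ge1Dx (t * (z i - m)).
have e : expR (t * z i) = expR (t * m) * expR (t * (z i - m)).
  by rewrite -expRD; congr expR; ring.
rewrite e.
have : expR (t * m) * (1 + t * (z i - m)) <= expR (t * m) * expR (t * (z i - m)).
  by rewrite ler_pM2l // expR_gt0.
have := hw _ pi; set E := expR (t * m); set F := expR (t * (z i - m)).
move=> w0 h2.
have : w i * (E * (1 + t * (z i - m))) <= w i * (E * F) by apply: ler_wpM2l.
move=> h3; apply: le_trans h3; rewrite le_eqVlt; apply/orP; left; apply/eqP; ring.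
Qed.

Lemma upper_exp t : (forall i, p i -> t * z i <= 2^-1) ->
  \sum_(i | p i) w i * expR (t * z i) <=
  expR (t * (\sum_(i | p i) w i * z i) + 2 * t ^+ 2 * \sum_(i | p i) w i * z i ^+ 2).
Proof.
move=> ht.
apply: le_trans (expR_ge1Dx _).
apply: (@le_trans _ _ (\sum_(i | p i) (w i + t * (w i * z i) + (2 * t ^+ 2) * (w i * z i ^+ 2)))).
  apply: ler_sum => i pi.
  have := @expR_le_quad R _ (ht i pi); move: (hw _ pi) => w0 h.
  have : w i * expR (t * z i) <= w i * (1 + t * z i + 2 * (t * z i) ^+ 2) by apply: ler_wpM2l.
  move=> h2; apply: le_trans h2 _; rewrite le_eqVlt; apply/orP; left; apply/eqP; ring.
rewrite !big_split /= -!mulr_sumr hs; lra.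
Qed.

End Weighted.
Section Dist.
Variable R : realType.

Lemma dist_le1 (T : finType) (P : T -> R) : is_dist P -> forall t, P t <= 1.
Proof.
move=> [h0 h1] t; rewrite -h1 (bigD1 t) //= lerDl.
by apply: sumr_ge0 => i _; exact: h0.
Qed.

Lemma sum_pos_mul (T : finType) (f g : T -> R) : (forall t, 0 <= f t) ->
  \sum_(t | 0 < f t) f t * g t = \sum_t f t * g t.
Proof.
move=> h; rewrite big_mkcond /=; apply: eq_bigr => t _.
case: ifP => // /negbT; rewrite -leNgt => ft.
have -> : f t = 0 by apply/eqP; rewrite eq_le ft h.
by rewrite mul0r.
Qed.

Lemma dist_sum_pos (T : finType) (P : T -> R) : is_dist P ->
  \sum_(t | 0 < P t) P t = 1.
Proof.
move=> [h0 h1]; have := @sum_pos_mul _ P (fun=> 1) h0.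
under eq_bigr do rewrite mulr1.
under [X in _ = X -> _]eq_bigr do rewrite mulr1.
by rewrite h1.
Qed.

Lemma pmul_gt0 (a b : R) : 0 <= a -> 0 <= b -> 0 < a * b -> 0 < a /\ 0 < b.
Proof.
move=> a0 b0 ab; split.
  rewrite lt_def a0 andbT; apply/eqP => a00; move: ab; rewrite a00 mul0r ltxx //.
rewrite lt_def b0 andbT; apply/eqP => b00; move: ab; rewrite b00 mulr0 ltxx //.
Qed.

Lemma sum_le_all (T : finType) (p : pred T) (F : T -> R) : (forall t, 0 <= F t) ->
  \sum_(t | p t) F t <= \sum_t F t.
Proof.
move=> h; rewrite big_mkcond /=; apply: ler_sum => t _; case: ifP => // _.
Qed.

End Dist.
Section Channel.
Variables (R : realType) (X Y : finType) (W : X -> Y -> R).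
Hypothesis hW : is_channel W.

Lemma W_ge0 x y : 0 <= W x y. Proof. exact: (hW x).1. Qed.
Lemma W_le1 x y : W x y <= 1. Proof. exact: dist_le1 (hW x) y. Qed.

Definition Lc := \sum_(t : X * Y | 0 < W t.1 t.2) - ln (W t.1 t.2).

Lemma nlnW_ge0 x y : 0 <= - ln (W x y).
Proof. by rewrite oppr_ge0 ln_le0 // W_le1. Qed.

Lemma Lc_bound {x y} : 0 < W x y -> - ln (W x y) <= Lc.
Proof.
move=> wp; rewrite /Lc (bigD1 (x, y)) //= lerDl.
by apply: sumr_ge0 => t _; exact: nlnW_ge0.
Qed.

Lemma Lc_ge0 : 0 <= Lc.
Proof. by apply: sumr_ge0 => t _; exact: nlnW_ge0. Qed.

Definition Cc := \sum_(t : X * Y) (8 + 2 * Lc ^+ 2).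

Section PQ.
Variables (P : X -> R) (Q : Y -> R).
Hypotheses (hP : is_dist P) (hQ : is_dist Q).

Definition Zf (t : X * Y) := ln (Q t.2) - ln (W t.1 t.2).

Lemma w_ge0 t : 0 <= prodPQ P Q t.
Proof. by rewrite /prodPQ mulr_ge0 //; [exact: hP.1|exact: hQ.1]. Qed.

Lemma w_dist : is_dist (prodPQ P Q).
Proof.
split; first exact: w_ge0.
rewrite /prodPQ -(pair_bigA _ (fun x y => P x * Q y)) /=.
under eq_bigr do rewrite -mulr_sumr hQ.2 mulr1.
exact: hP.2.
Qed.

Lemma w_sum : \sum_(t | 0 < prodPQ P Q t) prodPQ P Q t = 1.
Proof. exact: dist_sum_pos w_dist. Qed.

Lemma w_pos {t} : 0 < prodPQ P Q t -> 0 < P t.1 /\ 0 < Q t.2.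
Proof. by apply: pmul_gt0; [exact: hP.1|exact: hQ.1]. Qed.

Lemma ac_W {t} : abs_cont (prodPQ P Q) (joint P W) -> 0 < prodPQ P Q t ->
  0 < W t.1 t.2.
Proof.
move=> /forallP /(_ t) /implyP h pt; have := h pt; rewrite /joint.
by move=> /pmul_gt0 [] //; [exact: hP.1|exact: W_ge0].
Qed.

Lemma KL_ac : abs_cont (prodPQ P Q) (joint P W) ->
  KL (prodPQ P Q) (joint P W) =
  (\sum_(t | 0 < prodPQ P Q t) prodPQ P Q t * Zf t)%:E.
Proof.
move=> ac; rewrite /KL ac; congr EFin; apply: eq_bigr => t pt.
have [P0 Q0] := w_pos pt; have W0 := ac_W ac pt.
rewrite /Zf /joint /prodPQ ln_div ?posrE ?mulr_gt0 // !lnM ?posrE //.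
congr (_ * _); ring.
Qed.

Lemma renyi_sum_ac a : abs_cont (prodPQ P Q) (joint P W) ->
  renyi_sum a (prodPQ P Q) (joint P W) =
  \sum_(t | 0 < prodPQ P Q t) prodPQ P Q t * expR ((a - 1) * Zf t).
Proof.
move=> ac; apply: eq_bigr => t pt.
have [P0 Q0] := w_pos pt; have W0 := ac_W ac pt.
have PW : 0 < joint P W t by rewrite /joint mulr_gt0.
rewrite /powR !gt_eqF // -expRD.
rewrite -[X in _ = X * _](lnK (pt : prodPQ P Q t \in Num.pos)) -expRD.
congr expR; rewrite /Zf /joint /prodPQ !lnM ?posrE //; ring.
Qed.

Lemma wZ2_le {t} : 0 < prodPQ P Q t -> 0 < W t.1 t.2 ->
  prodPQ P Q t * Zf t ^+ 2 <= 8 + 2 * Lc ^+ 2.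
Proof.
move=> pt W0; have [P0 Q0] := w_pos pt.
have P1 := @dist_le1 R _ _ hP t.1; have Q1 := @dist_le1 R _ _ hQ t.2.
have hq := @q_ln2 R _ Q0 Q1.
have hb0 := nlnW_ge0 t.1 t.2; have hb1 := Lc_bound W0.
rewrite /prodPQ /Zf.
set A := ln (Q t.2) in hq *; set B := ln (W t.1 t.2) in hb0 hb1 *.
set p := P t.1 in P0 P1 *; set q := Q t.2 in Q0 Q1 hq *.
have h1 : (A - B) ^+ 2 <= 2 * A ^+ 2 + 2 * B ^+ 2.
  rewrite -subr_ge0.
  have -> : 2 * A ^+ 2 + 2 * B ^+ 2 - (A - B) ^+ 2 = (A + B) ^+ 2 by ring.
  exact: sqr_ge0.
have h2 : p * q * (A - B) ^+ 2 <= q * (A - B) ^+ 2.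
  rewrite -mulrA; apply: ler_piMl => //.
  by rewrite mulr_ge0 ?sqr_ge0 // ltW.
have h3 : B ^+ 2 <= Lc ^+ 2.
  by rewrite -sqrrN lerXn2r // ?nnegrE // (le_trans hb0).
have h4 : q * B ^+ 2 <= B ^+ 2 by rewrite ler_piMl // sqr_ge0.
have h5 : q * (A - B) ^+ 2 <= q * (2 * A ^+ 2 + 2 * B ^+ 2).
  by rewrite ler_wpM2l // ltW.
have e : q * (2 * A ^+ 2 + 2 * B ^+ 2) = 2 * (q * A ^+ 2) + 2 * (q * B ^+ 2).
  by ring.
rewrite e in h5; lra.
Qed.

Lemma Z_le {t} : 0 < prodPQ P Q t -> 0 < W t.1 t.2 -> Zf t <= Lc.
Proof.
move=> pt W0; have [P0 Q0] := w_pos pt.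
have := Lc_bound W0; have : ln (Q t.2) <= 0 by rewrite ln_le0 // dist_le1.
rewrite /Zf; lra.
Qed.

Lemma right_bounds a : 1 < a -> (a - 1) * Lc <= 2^-1 ->
  (KL (prodPQ P Q) (joint P W) <= renyi a (prodPQ P Q) (joint P W))%E /\
  (renyi a (prodPQ P Q) (joint P W) <=
     KL (prodPQ P Q) (joint P W) + ((a - 1) * (2 * Cc))%:E)%E.
Proof.
move=> a1 hL.
case ac : (abs_cont (prodPQ P Q) (joint P W)); last first.
  by rewrite /KL /renyi ac a1 /=.
rewrite KL_ac // /renyi a1 ac /= renyi_sum_ac //.
set p := (fun t => 0 < prodPQ P Q t).
set m := \sum_(t | p t) prodPQ P Q t * Zf t.
set S := \sum_(t | p t) prodPQ P Q t * expR ((a - 1) * Zf t).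
have hw : forall t, p t -> 0 <= prodPQ P Q t by move=> t _; exact: w_ge0.
have J := @jensen_exp R _ p (prodPQ P Q) Zf hw w_sum (a - 1).
rewrite -/m -/S in J.
have S0 : 0 < S by apply: lt_le_trans J; exact: expR_gt0.
rewrite gt_eqF //=.
have t0 : 0 < a - 1 by lra.
have lS1 : (a - 1) * m <= ln S.
  by rewrite -[X in X <= _]expRK ler_ln ?posrE ?expR_gt0.
have hz : forall t, p t -> (a - 1) * Zf t <= 2^-1.
  move=> t pt; apply: le_trans hL; rewrite ler_pM2l //.
  exact: Z_le pt (ac_W ac pt).
have Up := @upper_exp R _ p (prodPQ P Q) Zf hw w_sum (a - 1) hz.
rewrite -/m -/S in Up.
have C1 : \sum_(t | p t) prodPQ P Q t * Zf t ^+ 2 <= Cc.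
  apply: le_trans (@sum_le_all R _ p (fun t => 8 + 2 * Lc ^+ 2) _); last first.
    by move=> t; have := sqr_ge0 Lc; lra.
  apply: ler_sum => t pt; exact: wZ2_le pt (ac_W ac pt).
have lS2 : ln S <= (a - 1) * m + 2 * (a - 1) ^+ 2 * Cc.
  rewrite -[X in _ <= X]expRK ler_ln ?posrE ?expR_gt0 //.
  apply: le_trans Up _; rewrite ler_expR lerD2l ler_wpM2l //.
  by rewrite mulr_ge0 // sqr_ge0.
rewrite !lee_fin; split.
  by rewrite ler_pdivlMl.
by rewrite ler_pdivrMl // mulrDr; nra.
Qed.

Lemma left_upper a : a < 1 ->
  (renyi a (prodPQ P Q) (joint P W) <= KL (prodPQ P Q) (joint P W))%E.
Proof.
move=> a1.
case ac : (abs_cont (prodPQ P Q) (joint P W)); last by rewrite /KL ac leey.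
rewrite KL_ac // /renyi ac andbF renyi_sum_ac //.
set p := (fun t => 0 < prodPQ P Q t).
set m := \sum_(t | p t) prodPQ P Q t * Zf t.
set S := \sum_(t | p t) prodPQ P Q t * expR ((a - 1) * Zf t).
have hw : forall t, p t -> 0 <= prodPQ P Q t by move=> t _; exact: w_ge0.
have J := @jensen_exp R _ p (prodPQ P Q) Zf hw w_sum (a - 1).
rewrite -/m -/S in J.
have S0 : 0 < S by apply: lt_le_trans J; exact: expR_gt0.
rewrite gt_eqF //= lee_fin.
have lS1 : (a - 1) * m <= ln S.
  by rewrite -[X in X <= _]expRK ler_ln ?posrE ?expR_gt0.
by rewrite ler_ndivrMl //; lra.
Qed.

End PQ.
End Channel.
Section Holder.
Variable R : realType.

Lemma inv_powR (N s : R) : 0 < N -> (N^-1) `^ s = (N `^ s)^-1.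
Proof.
move=> N0; rewrite /powR !gt_eqF ?invr_gt0 // lnV ?posrE // mulrN expRN //.
Qed.

Lemma holder (Y : finType) (Q T : Y -> R) (a : R) : 0 < a < 1 -> is_dist Q ->
  (forall y, 0 <= T y) ->
  \sum_y Q y `^ a * T y <= (\sum_y T y `^ (1 - a)^-1) `^ (1 - a).
Proof.
move=> /andP[a0 a1] hQ hT.
set s := 1 - a; have s0 : 0 < s by rewrite /s subr_gt0.
set N := \sum_y T y `^ s^-1.
have N0 : 0 <= N by apply: sumr_ge0 => y _; exact: powR_ge0.
have [NZ|Np] := eqVneq N 0.
  have hz := psumr_eq0P (fun y _ => powR_ge0 (T y) s^-1) NZ.
  rewrite big1 ?powR_ge0 // => y _.
  by rewrite (powR_eq0_eq0 (hz y isT)) mulr0.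
have Ng : 0 < N by rewrite lt_def Np N0.
apply: (@le_trans _ _ (\sum_y N `^ s * (a * Q y + s * (T y `^ s^-1 / N)))).
  apply: ler_sum => y _.
  set v := T y `^ s^-1 / N.
  have v0 : 0 <= v by rewrite divr_ge0 // powR_ge0.
  have ev : T y = N `^ s * v `^ s.
    rewrite /v powRM ?invr_ge0 ?powR_ge0 // inv_powR // -powRrM mulVf ?gt_eqF //.
    rewrite powRr1 // mulrCA mulfV ?mulr1 //.
    by rewrite powR_eq0 negb_and (gt_eqF Ng).
  rewrite ev mulrCA ler_wpM2l ?powR_ge0 //.
  have aa : 0 < a < 1 by rewrite a0 a1.
  by have := @amgm R (Q y) v a (hQ.1 y) v0 aa.
rewrite -mulr_sumr big_split /= -!mulr_sumr hQ.2 -mulr_suml -/N mulfV ?gt_eqF //.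
rewrite mulr1 /s.
have -> : a + (1 - a) * 1 = 1 by ring.
by rewrite mulr1.
Qed.

End Holder.
Section Left.
Variables (R : realType) (X Y : finType) (W : X -> Y -> R).
Hypothesis hW : is_channel W.
Variable P : X -> R.
Hypothesis hP : is_dist P.

Definition Tf (a : R) (y : Y) := \sum_x P x * W x y `^ (1 - a).
Definition good (y : Y) := [forall x, (0 < P x) ==> (0 < W x y)].
Definition EV (y : Y) := \sum_(x | 0 < P x) P x * ln (W x y).
Definition Gf (y : Y) := if good y then expR (EV y) else 0.
Definition SG := \sum_y Gf y.
Definition Kc := \sum_(x | 0 < P x) (P x)^-1.
Definition Bf (a : R) :=
  SG * expR (2 * (1 - a) * (@Lc R X Y W) ^+ 2) + \sum_(y : Y) ((1 - a) * Kc).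

Lemma Tf_ge0 a y : 0 <= Tf a y.
Proof. by apply: sumr_ge0 => x _; rewrite mulr_ge0 ?powR_ge0 //; exact: hP.1. Qed.

Lemma Gf_ge0 y : 0 <= Gf y.
Proof. by rewrite /Gf; case: ifP => // _; exact: expR_ge0. Qed.

Lemma Kc_ge0 : 0 <= Kc.
Proof. by apply: sumr_ge0 => x px; rewrite invr_ge0 ltW. Qed.

Lemma renyi_sum_le a Q : 0 < a < 1 -> is_dist Q ->
  renyi_sum a (prodPQ P Q) (joint P W) <= \sum_y Q y `^ a * Tf a y.
Proof.
move=> /andP[a0 a1] hQ.
have F0 : forall t : X * Y, 0 <= P t.1 * (Q t.2 `^ a * W t.1 t.2 `^ (1 - a)).
  by move=> t; rewrite mulr_ge0 ?mulr_ge0 ?powR_ge0 //; exact: hP.1.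
rewrite /renyi_sum (eq_bigr (fun t => P t.1 * (Q t.2 `^ a * W t.1 t.2 `^ (1 - a)))).
  apply: le_trans (@sum_le_all R _ _ _ F0) _.
  rewrite -(pair_bigA _ (fun x y => P x * (Q y `^ a * W x y `^ (1 - a)))) /=.
  rewrite exchange_big /= le_eqVlt; apply/orP; left; apply/eqP.
  apply: eq_bigr => y _; rewrite /Tf mulr_sumr; apply: eq_bigr => x _; ring.
move=> t pt; have [P0 Q0] := @pmul_gt0 R _ _ (hP.1 _) (hQ.1 _) pt.
rewrite /prodPQ /joint !powRM ?(hP.1 _) ?(hQ.1 _) ?(@W_ge0 R X Y W hW) //.
have e : P t.1 `^ a * P t.1 `^ (1 - a) = P t.1.
  rewrite -powRD; first last.
    by rewrite (gt_eqF P0) implybT.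
  have -> : a + (1 - a) = 1 by ring.
  by rewrite powRr1 // ltW.
rewrite -[X in _ = X * _]e; ring.
Qed.

Lemma Psum : \sum_(x | 0 < P x) P x = 1.
Proof. exact: dist_sum_pos hP. Qed.

Lemma T_good a y : 0 < 1 - a -> good y ->
  Tf a y `^ (1 - a)^-1 <= Gf y * expR (2 * (1 - a) * (@Lc R X Y W) ^+ 2).
Proof.
move=> s0 gy; set s := 1 - a in s0 *.
set L := @Lc R X Y W.
have gW : forall x, 0 < P x -> 0 < W x y.
  by move=> x px; move/forallP: gy => /(_ x) /implyP; apply.
have eT : Tf a y = \sum_(x | 0 < P x) P x * expR (s * ln (W x y)).
  rewrite /Tf -(@sum_pos_mul R _ P (fun x => W x y `^ s) hP.1).
  apply: eq_bigr => x px; rewrite /powR gt_eqF ?gW //.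
have hw : forall x, 0 < P x -> 0 <= P x by move=> x px; exact: ltW.
have hz : forall x, 0 < P x -> s * ln (W x y) <= 2^-1.
  move=> x px; apply: (@le_trans _ _ 0); last by lra.
  by rewrite pmulr_rle0 // ln_le0 // (@W_le1 R X Y W hW).
have Up := @upper_exp R _ (fun x => 0 < P x) P (fun x => ln (W x y)) hw Psum s hz.
rewrite -eT -/(EV y) in Up.
have V2 : \sum_(x | 0 < P x) P x * ln (W x y) ^+ 2 <= L ^+ 2.
  rewrite -[X in _ <= X]mul1r -Psum mulr_suml; apply: ler_sum => x px.
  rewrite ler_wpM2l ?hw // -sqrrN lerXn2r ?nnegrE ?(@nlnW_ge0 R X Y W hW) //.
    exact: (le_trans (@nlnW_ge0 R X Y W hW x y) (@Lc_bound R X Y W hW x y (gW x px))).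
  exact: (@Lc_bound R X Y W hW x y (gW x px)).
have Up2 : Tf a y <= expR (s * EV y + 2 * s ^+ 2 * L ^+ 2).
  apply: le_trans Up _; rewrite ler_expR lerD2l ler_wpM2l //.
  by rewrite mulr_ge0 // sqr_ge0.
rewrite /Gf gy.
apply: le_trans (ge0_ler_powR _ _ _ Up2) _.
- by rewrite invr_ge0 ltW.
- exact: Tf_ge0.
- exact: expR_ge0.
rewrite -expRM -expRD le_eqVlt; apply/orP; left; apply/eqP; congr expR.
have sn : s != 0 by rewrite gt_eqF.
by field.
Qed.


Lemma pow_small (p s : R) : 0 < p -> p <= 1 -> 0 < s ->
  (1 - p) `^ s^-1 <= s / p.
Proof.
move=> p0 p1 s0.
have [->|pn1] := eqVneq p 1.
  by rewrite subrr powR0 ?invr_neq0 ?gt_eqF // divr_ge0 // ltW.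
have pl1 : p < 1 by rewrite lt_neqAle pn1 p1.
have q0 : 0 < 1 - p by rewrite subr_gt0.
rewrite /powR gt_eqF //.
have hl : ln (1 - p) <= - p by apply: le_ln1Dx; lra.
set v := p / s.
have v0 : 0 < v by rewrite divr_gt0.
have h1 : expR (s^-1 * ln (1 - p)) <= expR (- v).
  rewrite ler_expR /v mulrC -mulNr ler_wpM2r // invr_ge0 ltW //.
apply: le_trans h1 _.
rewrite expRN.
apply: (@le_trans _ _ (1 + v)^-1).
  by rewrite lef_pV2 ?posrE ?expR_gt0 ?expR_ge1Dx //; lra.
apply: (@le_trans _ _ v^-1).
  by rewrite lef_pV2 ?posrE //; lra.
by rewrite /v invf_div.
Qed.

Lemma T_bad a y : 0 < 1 - a -> ~~ good y -> Tf a y `^ (1 - a)^-1 <= (1 - a) * Kc.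
Proof.
move=> s0 /forallPn [x0]; rewrite negb_imply -leNgt => /andP [px0 w0].
have W0 : W x0 y = 0.
  by apply/eqP; rewrite eq_le w0 (@W_ge0 R X Y W hW).
set s := 1 - a in s0 *.
have p1 : P x0 <= 1 := @dist_le1 R _ _ hP x0.
have T1 : Tf a y <= 1 - P x0.
  rewrite /Tf (bigD1 x0) //= W0 powR0 ?gt_eqF // mulr0 add0r.
  rewrite -[X in _ <= X - _]hP.2 [X in _ <= X - _](bigD1 x0) //= addrAC subrr add0r.
  apply: ler_sum => x _; apply: ler_piMr; first exact: hP.1.
  apply: le_trans (ge0_ler_powR (ltW s0) _ _ (@W_le1 R X Y W hW x y)) _.
  - by rewrite nnegrE (@W_ge0 R X Y W hW).
  - by rewrite nnegrE.
  - by rewrite powR1.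
apply: le_trans (ge0_ler_powR _ _ _ T1) _.
- by rewrite invr_ge0 ltW.
- exact: Tf_ge0.
- by rewrite nnegrE subr_ge0.

apply: le_trans (@pow_small (P x0) s px0 p1 s0) _.
apply: ler_wpM2l; first exact: ltW.
rewrite /Kc (bigD1 x0) //= lerDl; apply: sumr_ge0 => x /andP[px _].
by rewrite invr_ge0 ltW.
Qed.

Lemma N_bound a : 0 < 1 - a ->
  \sum_y Tf a y `^ (1 - a)^-1 <= Bf a.
Proof.
move=> s0; rewrite /Bf /SG mulr_suml -big_split /=.
apply: ler_sum => y _.
have sK : 0 <= (1 - a) * Kc by rewrite mulr_ge0 ?Kc_ge0 // ltW.
case gy : (good y).
  by apply: le_trans (@T_good a y s0 gy) _; rewrite lerDl.
rewrite /Gf gy mul0r add0r; apply: (@T_bad a y s0); by rewrite gy.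
Qed.


Lemma left_lower a l Q : 0 < a < 1 -> Bf a < expR (- l) -> is_dist Q ->
  (l%:E <= renyi a (prodPQ P Q) (joint P W))%E.
Proof.
move=> aa hB hQ; have /andP[a0 a1] := aa.
have s0 : 0 < 1 - a by rewrite subr_gt0.
have a1f : (1 < a) = false by apply/negbTE; rewrite -leNgt ltW.
rewrite /renyi a1f /=.
set S := renyi_sum a _ _.
case: eqP => [_|Sn]; first exact: leey.
have S0 : 0 <= S by apply: sumr_ge0 => t _; rewrite mulr_ge0 ?powR_ge0.
have Sp : 0 < S by rewrite lt_def S0 andbT; apply/eqP.
set N := \sum_y Tf a y `^ (1 - a)^-1.
have h1 : S <= N `^ (1 - a).
  exact: le_trans (@renyi_sum_le a Q aa hQ) (@holder R Y Q (Tf a) a aa hQ (Tf_ge0 a)).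
have h2 : N < expR (- l) := le_lt_trans (@N_bound a s0) hB.
have h3 : N `^ (1 - a) < expR (- l * (1 - a)).
  rewrite expRM; apply: (@gt0_ltr_powR R (1 - a) s0 N (expR (- l))) => //.
    by rewrite nnegrE /N; apply: sumr_ge0 => y _; exact: powR_ge0.
  by rewrite nnegrE expR_ge0.
have h4 : ln S < - l * (1 - a).
  rewrite -[X in _ < X]expRK ltr_ln ?posrE ?expR_gt0 //.
  exact: le_lt_trans h1 h3.
rewrite lee_fin ler_ndivlMl; last by rewrite subr_lt0.
apply: ltW; apply: (lt_le_trans h4).
rewrite le_eqVlt; apply/orP; left; apply/eqP; ring.
Qed.

Lemma gibbs : 0 < SG ->
  exists2 Q, is_dist Q & KL (prodPQ P Q) (joint P W) = (- ln SG)%:E.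
Proof.
move=> SGp.
set Q := fun y => Gf y / SG.
have hQ : is_dist Q.
  split; first by move=> y; rewrite divr_ge0 ?Gf_ge0 ?ltW.
  by rewrite /Q -mulr_suml -/SG mulfV ?gt_eqF.
exists Q => //.
have Qpos : forall y, 0 < Q y -> good y /\ Q y = expR (EV y) / SG.
  move=> y; rewrite /Q /Gf; case: ifP => gy //.
  by rewrite mul0r ltxx.
have ac : abs_cont (prodPQ P Q) (joint P W).
  apply/forallP => t; apply/implyP => pt.
  have [P0 Q0] := @pmul_gt0 R _ _ (hP.1 _) (hQ.1 _) pt.
  have [gy _] := Qpos _ Q0.
  rewrite /joint mulr_gt0 //.
  by move/forallP: gy => /(_ t.1) /implyP; apply.
rewrite (@KL_ac R X Y W hW P Q hP hQ ac); congr EFin.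
rewrite (@sum_pos_mul R _ (prodPQ P Q) (Zf R X Y W Q) (@w_ge0 R X Y P Q hP hQ)).
rewrite -(pair_bigA _ (fun x y => prodPQ P Q (x, y) * Zf R X Y W Q (x, y))) /= exchange_big /=.
transitivity (\sum_y Q y * - ln SG); last first.
  by rewrite -mulr_suml hQ.2 mul1r.
apply: eq_bigr => y _.
rewrite /prodPQ /Zf /=.
have [qy|qy] := boolP (0 < Q y).
  have [gy eQ] := Qpos y qy.
  transitivity (\sum_x (Q y * ln (Q y)) * P x - \sum_x Q y * (P x * ln (W x y))).
    by rewrite -sumrB; apply: eq_bigr => x _; ring.
  rewrite -mulr_sumr hP.2 mulr1 -mulr_sumr.
  rewrite -(@sum_pos_mul R _ P (fun x => ln (W x y)) hP.1) -/(EV y).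
  rewrite [in ln (Q y)]eQ ln_div ?posrE ?expR_gt0 // expRK; ring.
have q0 : Q y = 0 by apply/eqP; rewrite eq_le (hQ.1 y) andbT leNgt.
by rewrite q0 mul0r; apply: big1 => x _; rewrite mulr0 mul0r.
Qed.

End Left.

Section Squeeze.
Variable R : realType.
Local Open Scope ereal_scope.

Lemma ecvg_squeeze {T} {F : set_system T} {FF : Filter F} (f : T -> \bar R)
  (u : \bar R) :
  (forall l : R, l%:E < u -> \forall x \near F, l%:E <= f x) ->
  (forall r : R, u < r%:E -> \forall x \near F, f x <= r%:E) -> f @ F --> u.
Proof.
case: u => [u| |] h1 h2.
- have H1 := h1 (u - 1)%R; rewrite lte_fin gtrBl ltr01 in H1.
  have H2 := h2 (u + 1)%R; rewrite lte_fin ltrDl ltr01 in H2.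
  apply/fine_cvgP; split.
    by apply: filterS2 (H1 isT) (H2 isT) => x; case: (f x).
  apply/cvgrPdist_lt => e e0.
  have A := h1 (u - e / 2)%R; have B := h2 (u + e / 2)%R.
  rewrite lte_fin gtrBl divr_gt0 // in A; rewrite lte_fin ltrDl divr_gt0 // in B.
  apply: filterS2 (A isT) (B isT) => x /=; case: (f x) => // r.
  rewrite !lee_fin /= => a b.
  rewrite ltr_norml; apply/andP; split; lra.
- by apply/cvgeyPge => A; apply: h1; exact: ltry.
- by apply/cvgeNyPle => A; apply: h2; exact: ltNyr.
Qed.

End Squeeze.
Section Aux.
Variable R : realType.
Local Open Scope ereal_scope.

Lemma inf_le_inf (T : Type) (A : set T) (f g : T -> \bar R) :
  (forall x, A x -> f x <= g x) -> ereal_inf (f @` A) <= ereal_inf (g @` A).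
Proof.
move=> h; apply: le_ereal_inf_tmp => _ [x Ax <-].
apply: le_trans (h x Ax); apply: ereal_inf_lbound; by exists x.
Qed.

Lemma sup_le_sup (T : Type) (A : set T) (f g : T -> \bar R) :
  (forall x, A x -> f x <= g x) -> ereal_sup (f @` A) <= ereal_sup (g @` A).
Proof.
move=> h; apply: ge_ereal_sup => _ [x Ax <-].
apply: le_trans (h x Ax) _; apply: ereal_sup_ubound; by exists x.
Qed.

Lemma cvg_lin (u c : R) : (u + (a - 1) * c)%R @[a --> (1:R)^'+] --> u.
Proof.
apply: cvg_at_right_filter.
have {2}-> : u = (u + (1 - 1) * c)%R by rewrite subrr mul0r addr0.
apply: cvgD; first exact: cvg_cst.
apply: cvgM; last exact: cvg_cst.
apply: cvgB; [exact: cvg_id|exact: cvg_cst].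
Qed.

Lemma cvg_B (s c k n : R) :
  (s * expR (2 * (1 - a) * c) + n * ((1 - a) * k))%R @[a --> (1:R)^'-] --> s.
Proof.
apply: cvg_at_left_filter.
have {2}-> : s = (s * expR (2 * (1 - 1) * c) + n * ((1 - 1) * k))%R.
  by rewrite subrr !mulr0 !mul0r expR0 mulr1 mulr0 addr0.
apply: cvgD.
  apply: cvgM; first exact: cvg_cst.
  apply: continuous_cvg; first exact: continuous_expR.
  apply: cvgM; last exact: cvg_cst.
  apply: cvgM; first exact: cvg_cst.
  apply: cvgB; [exact: cvg_cst|exact: cvg_id].
apply: cvgM; first exact: cvg_cst.
apply: cvgM; last exact: cvg_cst.
apply: cvgB; [exact: cvg_cst|exact: cvg_id].
Qed.

Lemma sum_cst (Y : finType) (c : R) : (\sum_(y : Y) c = #|Y|%:R * c)%R.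
Proof. by rewrite sumr_const mulr_natl. Qed.

End Aux.

Section Main.
Variables (R : realType) (X Y : finType) (W : X -> Y -> R).
Hypothesis hW : is_channel W.
Local Open Scope ereal_scope.

Lemma right_U a : (1 < a)%R -> ((a - 1) * Lc R X Y W <= 2^-1)%R ->
  U W <= U_alpha W a /\ U_alpha W a <= U W + ((a - 1) * (2 * Cc R X Y W))%:E.
Proof.
move=> a1 hL; split.
  apply: sup_le_sup => P hP; apply: inf_le_inf => Q hQ /=.

  exact: (@right_bounds R X Y W hW P Q hP hQ a a1 hL).1.
apply: ge_ereal_sup => _ [P hP <-].
set c := ((a - 1) * (2 * Cc R X Y W))%:E.
set mA := ereal_inf _.
set m := ereal_inf ((fun Q => KL (prodPQ P Q) (joint P W)) @` (@dists R Y)).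
have h : mA - c <= m.
  apply: le_ereal_inf_tmp => _ [Q hQ <-].
  rewrite leeBlDr //; apply: le_trans (@right_bounds R X Y W hW P Q hP hQ a a1 hL).2.
  apply: ereal_inf_lbound; by exists Q.
rewrite leeBlDr // in h; apply: le_trans h _; apply: leeD2r.
apply: ereal_sup_ubound; by exists P.
Qed.

Lemma right_cvg : U_alpha W a @[a --> (1:R)^'+] --> U W.
Proof.
set c := (2 * Cc R X Y W)%R.
have ev : \forall a \near (1:R)^'+, (1 < a)%R /\ ((a - 1) * Lc R X Y W <= 2^-1)%R.
  have h1 := @nbhs_right_gt R 1.
  have h2 : \forall a \near (1:R)^'+, (0 + (a - 1) * Lc R X Y W <= 2^-1)%R.
    have h4 : (0 < 2^-1 :> R)%R by rewrite invr_gt0 ltr0n.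
    exact: (cvgr_le 0%R (@cvg_lin R 0%R (Lc R X Y W)) _ h4).
  by apply: filterS2 h1 h2 => a a1; rewrite add0r => hL; split.
apply: ecvg_squeeze.
- move=> l lU; apply: filterS ev => a [a1 hL].
  exact: le_trans (ltW lU) (@right_U a a1 hL).1.
- move=> r; case EU : (U W) => [u| |] Ur //.
  + rewrite lte_fin in Ur; have h2 := cvgr_le u (@cvg_lin R u c) r Ur.

    apply: filterS2 ev (h2 _) => a [a1 hL] hr.
    apply: le_trans (@right_U a a1 hL).2 _.
    by rewrite EU -EFinD lee_fin.
  + apply: filterS ev => a [a1 hL].
    by have := (@right_U a a1 hL).2; rewrite EU addNye leeNy_eq => /eqP ->.
Qed.


Lemma left_cvg : U_alpha W a @[a --> (1:R)^'-] --> U W.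
Proof.
apply: ecvg_squeeze.
- move=> l lU.
  have [_ [P hP <-] lP] := ereal_sup_gt lU.
  set m := ereal_inf _ in lP.
  have SG0 : (0 <= SG R X Y W P)%R by apply: sumr_ge0 => y _; exact: Gf_ge0.
  have SGlt : (SG R X Y W P < expR (- l))%R.
    have [->|SGn] := eqVneq (SG R X Y W P) 0%R; first exact: expR_gt0.
    have SGp : (0 < SG R X Y W P)%R by rewrite lt_def SGn SG0.
    have [Q hQ eQ] := @gibbs R X Y W hW P hP SGp.
    have h : m <= (- ln (SG R X Y W P))%:E.
      by rewrite -eQ; apply: ereal_inf_lbound; exists Q.
    have := lt_le_trans lP h; rewrite lte_fin => h2.
    by rewrite -(lnK (SGp : SG R X Y W P \in Num.pos)) ltr_expR ltrNr.
  have hB : \forall a \near (1:R)^'-, (Bf R X Y W P a < expR (- l))%R.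
    have e : forall a, Bf R X Y W P a =
        (SG R X Y W P * expR (2 * (1 - a) * Lc R X Y W ^+ 2) + #|Y|%:R * ((1 - a) * Kc R X P))%R.
      by move=> a; rewrite /Bf sum_cst.
    have := cvgr_lt (SG R X Y W P) (@cvg_B R (SG R X Y W P) (Lc R X Y W ^+ 2) (Kc R X P) #|Y|%:R)
      (expR (- l)) SGlt.
    move=> /(_ _) h; apply: filterS h => a; by rewrite e.
  have h0 : \forall a \near (1:R)^'-, (0 < a)%R := nbhs_left_gt ltr01.
  have h1 : \forall a \near (1:R)^'-, (a < 1)%R := nbhs_left_lt _.
  apply: filterS3 hB h0 h1 => a hBa a0 a1.
  have aa : (0 < a < 1)%R by rewrite a0 a1.
  apply: (@le_trans _ _ (ereal_inf ((fun Q => renyi a (prodPQ P Q) (joint P W)) @` (@dists R Y)))).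
    apply: le_ereal_inf_tmp => _ [Q hQ <-].
    exact: (@left_lower R X Y W hW P hP a l Q aa hBa hQ).
  apply: ereal_sup_ubound; by exists P.
- move=> r Ur; apply: filterS (nbhs_left_lt _) => a a1.
  apply: le_trans (ltW Ur).
  apply: sup_le_sup => P hP; apply: inf_le_inf => Q hQ /=.
  exact: (@left_upper R X Y W hW P Q hP hQ a a1).
Qed.

End Main.

Theorem mainTheorem14 (R : realType) (X Y : finType) (W : X -> Y -> R)
  (hW : is_channel W) :
  (U_alpha W a @[a --> 1^'-] --> U W) /\ (U_alpha W a @[a --> 1^'+] --> U W).
Proof. split; [exact: left_cvg|exact: right_cvg]. Qed.
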